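(* Let $F$ be any algebraically closed field and let $G_F$ be the group of polynomial automorphisms of the affine space $\mathbb{A}^3_F$ generated by the three maps $m_1(x,y,z)=(yz-x,y,z)$, $m_2(x,y,z)=(x,xz-y,z)$, $m_3(x,y,z)=(x,y,xy-z)$. Then the homomorphism from the free product $\mathbb{Z}/2*\mathbb{Z}/2*\mathbb{Z}/2$ to $G_F$ sending the generator of the $i$-th factor to $m_i$ is an isomorphism; i.e. $G_F\cong\mathbb{Z}/2*\mathbb{Z}/2*\mathbb{Z}/2$, the only relations among $m_1,m_2,m_3$ being $m_i^2=1$.
   Context: Each $m_i$ is a polynomial involution of $F^3$ (with integer coefficients). *)

(* Defs.v *)
From HB Require Import structures.
From mathcomp Require Import all_boot all_order all_algebra.
Set Implicit Arguments. Unset Strict Implicit. Unset Printing Implicit Defensive.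
Import GRing.Theory.
Local Open Scope ring_scope.

Definition pt3 (F : Type) := (F * F * F)%type.

(* The three Markov-type involutions m_1, m_2, m_3 (indexed by 'I_3 = {0,1,2}). *)
Definition markov_inv (F : comNzRingType) (i : 'I_3) (p : pt3 F) : pt3 F :=
  let: (x, y, z) := p in
  match val i with
  | 0%N => (y * z - x, y, z)
  | 1%N => (x, x * z - y, z)
  | _ => (x, y, x * y - z)
  end.

Definition word_map (F : comNzRingType) (w : seq 'I_3) : pt3 F -> pt3 F :=
  foldr (fun i f => markov_inv i \o f) id w.

(* A word is reduced (normal form in Z/2*Z/2*Z/2) if no two consecutive letters agree. *)
Definition reduced_word (w : seq 'I_3) : bool := sorted (fun i j : 'I_3 => i != j) w.

(* Main.v *)
Require Import Defs.
From HB Require Import structures.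
From mathcomp Require Import all_boot all_order all_algebra.
From mathcomp Require Import zify ring.
Set Implicit Arguments. Unset Strict Implicit. Unset Printing Implicit Defensive.
Import GRing.Theory.
Local Open Scope ring_scope.

Section Aux.
Variable F : closedFieldType.

Definition ev (t : F) (p : pt3 {poly F}) : pt3 F :=
  let: (a, b, c) := p in (a.[t], b.[t], c.[t]).

Lemma markov_ev t i p : markov_inv i (ev t p) = ev t (markov_inv i p).
Proof.
case: p => [[a b] c]; case: i => [[|[|[|k]]] Hi] //=; by rewrite !hornerE.
Qed.

Lemma word_ev t w p : word_map w (ev t p) = ev t (word_map w p).
Proof. elim: w => [|i w IH] //=; by rewrite IH markov_ev. Qed.

Definition sz (q : {poly F}) : nat := size q.

Definition Inv (i : 'I_3) (p : pt3 {poly F}) : Prop :=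
  let: (a, b, c) := p in
  [/\ (2 <= sz a)%N, (2 <= sz b)%N, (2 <= sz c)%N &
  match val i with
  | 0%N => (sz b < sz a)%N /\ (sz c < sz a)%N
  | 1%N => (sz a < sz b)%N /\ (sz c < sz b)%N
  | _ => (sz a < sz c)%N /\ (sz b < sz c)%N
  end].

Lemma L (x y z : {poly F}) : (2 <= sz y)%N -> (2 <= sz z)%N ->
  (sz x < sz y + sz z - 1)%N -> sz (y * z - x) = (sz y + sz z - 1)%N.
Proof.
rewrite /sz => hy hz hx.
have y0 : y != 0 by rewrite -size_poly_eq0; lia.
have z0 : z != 0 by rewrite -size_poly_eq0; lia.
by rewrite size_polyDl size_mul ?subn1 // size_polyN -?subn1.
Qed.

Definition P0 : pt3 {poly F} := ('X, 'X, 'X).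

Lemma base i : Inv i (markov_inv i P0).
Proof.
have h : sz 'X = 2%N by rewrite /sz size_polyX.
case: i => [[|[|[|k]]] Hi] //=; rewrite ?L ?h //=.
Qed.

Lemma step i j p : Inv j p -> j != i -> Inv i (markov_inv i p).
Proof.
case: p => [[a b] c].
case: i => [[|[|[|k]]] Hi] //; case: j => [[|[|[|l]]] Hj] //= [ha hb hc] [h1 h2] _;
  rewrite L; try lia; (repeat match goal with |- _ /\ _ => split | |- and4 _ _ _ _ => split end); lia.
Qed.

Lemma inv_word i w : reduced_word (i :: w) -> Inv i (word_map (i :: w) P0).
Proof.
elim: w i => [|j w IH] i; first by move=> _; apply: base.
rewrite /reduced_word /= => /andP [hij hw].
have := IH j hw => hI.
by apply: (step hI); rewrite eq_sym.
Qed.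

Lemma inv_neq i p : Inv i p -> p <> P0.
Proof.
case: p => [[a b] c] H E; case: E H => -> -> ->.
case: i => [[|[|[|k]]] Hi] //= [_ _ _ [h _]]; lia.
Qed.

Lemma nonroot (q : {poly F}) : q != 0 -> exists t, q.[t] != 0.
Proof.
move=> q0.
have hs : size (q * 'X - 1) = (size q).+1.
  rewrite size_polyDl size_mulX // size_polyN size_poly1.
  by rewrite ltnS lt0n size_poly_eq0.
have : size (q * 'X - 1) != 1%N by rewrite hs eqSS size_poly_eq0.
move/closed_rootP => [t]; rewrite /root !hornerE subr_eq0 => /eqP ht.
exists t; apply/eqP => h; move: ht; rewrite h mul0r => /eqP; by rewrite eq_sym oner_eq0.
Qed.

End Aux.
Local Close Scope ring_scope.

Theorem proposition1p5 (F : closedFieldType) :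
  (forall i : 'I_3, forall p : pt3 F, markov_inv i (markov_inv i p) = p) /\
  (forall w : seq 'I_3, reduced_word w -> w != [::] ->
     exists p : pt3 F, word_map w p <> p).
Proof.
Local Open Scope ring_scope.
split.
  move=> i [[x y] z]; case: i => [[|[|[|k]]] Hi] //=; congr (_, _, _); ring.
case=> [|i w] // hw _.
have hI := @inv_word F i w hw.
have hne := inv_neq hI.
move: hne; case E: (word_map (i :: w) (P0 F)) => [[a b] c] hne.
have : (a - 'X != 0) \/ (b - 'X != 0) \/ (c - 'X != 0).
  case: (eqVneq (a - 'X) 0) => [/eqP|]; last by left.
  rewrite subr_eq0 => /eqP Ea.
  case: (eqVneq (b - 'X) 0) => [/eqP|]; last by right; left.
  rewrite subr_eq0 => /eqP Eb.
  case: (eqVneq (c - 'X) 0) => [/eqP|]; last by right; right.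
  rewrite subr_eq0 => /eqP Ec.
  by exfalso; apply: hne; rewrite Ea Eb Ec.
have key : forall t, word_map (i :: w) (t, t, t) = (a.[t], b.[t], c.[t]).
  move=> t; have -> : ((t, t, t) : pt3 F) = ev t (P0 F) by rewrite /= hornerX.
  by rewrite word_ev E.
case=> [|[]] /nonroot [t]; rewrite !hornerE subr_eq0 => ht;
  exists (t, t, t); rewrite key => -[]; move/eqP: ht.
- by move=> h ? ? ?; apply: h.
- by move=> h ? ? ?; apply: h.
- by move=> h ? ? ?; apply: h.
Qed.
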